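(* Let $A$ be an $F_n$-good $n\times n$ matrix. Then: (1) Any entry $1$ in column $1$ of $A$ lies in row $1$ or row $n$; similarly any entry $1$ in column $n$ lies in row $1$ or row $n$. (2) Each of the rows $A_2,A_3,\ldots,A_{n-1}$ is a standard basis vector $\vec{e}_j$ (a row of the identity matrix $I_n$), and these $n-2$ rows are pairwise distinct. (3) Each of the rows $A_1$ and $A_n$ contains either one or two entries equal to $1$. (4) Row $A_1$ has an entry $1$ in column $1$ or in column $n$, and the same holds for row $A_n$. If $A_1$ (resp. $A_n$) has a second entry equal to $1$, it lies in column $3$ or column $n-2$.
   Context: $F_n$ is the set of vectors $\vec{x}=(x_1,\ldots,x_n)\in\mathbb{Z}_2^n$ with no $i$ such that $x_i=x_{i+1}=1$. An $n\times n$ matrix $A$ over $\mathbb{Z}_2$ is $F_n$-good if it is invertible and $A\vec{x}\in F_n$ for all $\vec{x}\in F_n$. $A_i$ denotes the $i$-th row of $A$, $A_{i,j}$ its $(i,j)$ entry, and $\vec{e}_j$ the $j$-th standard basis vector of $\mathbb{Z}_2^n$. *)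

(* Defs.v *)
From HB Require Import structures.
From mathcomp Require Import all_boot all_order all_algebra.
Set Implicit Arguments. Unset Strict Implicit. Unset Printing Implicit Defensive.
Import GRing.Theory.
Local Open Scope ring_scope.

(* Vectors of Z_2^n are column vectors 'cV['F_2]_n; index i : 'I_n stands for
   the paper's index i+1. *)

Definition inFn (n : nat) (x : 'cV['F_2]_n) : Prop :=
  forall (i j : 'I_n), nat_of_ord j = (nat_of_ord i).+1 ->
    ~ (x i 0 = 1 /\ x j 0 = 1).

Definition Fn_good (n : nat) (A : 'M['F_2]_n) : Prop :=
  A \in unitmx /\ forall x : 'cV['F_2]_n, inFn x -> inFn (A *m x).

(* Main.v *)
Require Import Defs.
From HB Require Import structures.
From mathcomp Require Import all_boot all_order all_algebra zify.
From Stdlib Require Import Classical.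
Import GRing.Theory.
Local Open Scope ring_scope.

Module Helpers.
Set Implicit Arguments. Unset Strict Implicit.


Lemma F2_01 (x : 'F_2) : x = 0 \/ x = 1.
Proof. case: x => [[|[|m]] Hm]; [left; exact/eqP|right; exact/eqP|by []]. Qed.

Lemma F2_n1 (x : 'F_2) : x <> 1 -> x = 0.
Proof. by case: (F2_01 x). Qed.

Lemma F2_10 : (1 : 'F_2) <> 0.
Proof. by []. Qed.

Lemma mul_e n (A : 'M['F_2]_n) i j : (A *m (delta_mx j (0:'I_1) : 'cV_n)) i 0 = A i j.
Proof. by rewrite -colE mxE. Qed.

Lemma delta_e n (j i : 'I_n) : (delta_mx j 0 : 'cV['F_2]_n) i 0 = (i == j)%:R.
Proof. by rewrite mxE andbT. Qed.

Lemma row_ex n (A : 'M['F_2]_n) : A \in unitmx -> forall i, exists j, A i j = 1.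
Proof.
move=> U i; apply: NNPP => H.
have H0 : row i A = 0.
  apply/matrixP => x y; rewrite !mxE; apply: F2_n1 => Hy; apply: H; by exists y.
have : row i A *m invmx A = 0 by rewrite H0 mul0mx.
rewrite rowE mulmxK // => /matrixP /(_ 0 i); rewrite !mxE !eqxx /=; exact: F2_10.
Qed.

Lemma col_ex n (A : 'M['F_2]_n) : A \in unitmx -> forall j, exists i, A i j = 1.
Proof.
move=> U j; apply: NNPP => H.
have H0 : col j A = 0.
  apply/matrixP => x y; rewrite !mxE; apply: F2_n1 => Hy; apply: H; by exists x.
have : invmx A *m col j A = 0 by rewrite H0 mulmx0.
rewrite colE mulKmx // => /matrixP /(_ j 0); rewrite !mxE !eqxx /=; exact: F2_10.
Qed.

Lemma row_neq n (A : 'M['F_2]_n) : A \in unitmx -> forall i i',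
  i != i' -> exists j, A i j <> A i' j.
Proof.
move=> U i i' Hii; apply: NNPP => H.
have H0 : row i A - row i' A = 0.
  apply/matrixP => x y; rewrite !mxE.
  have -> : A i y = A i' y by apply: NNPP => Hy; apply: H; exists y.
  by rewrite subrr.
have : (row i A - row i' A) *m invmx A = 0 by rewrite H0 mul0mx.
rewrite !rowE -mulmxBl mulmxK // => /matrixP /(_ 0 i); rewrite !mxE !eqxx /= (negbTE Hii) /=.
by rewrite subr0; exact: F2_10.
Qed.



Lemma nat_F2 (b : bool) : (b%:R : 'F_2) = 1 -> b.
Proof. by case: b. Qed.

Lemma disj n (A : 'M['F_2]_n) (hg : Fn_good A) (r s j : 'I_n) :
  nat_of_ord s = (nat_of_ord r).+1 -> A r j = 1 -> A s j = 1 -> False.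
Proof.
move: hg => [_ G] Hs Hr Hs'.
have hx : inFn (delta_mx j (0:'I_1) : 'cV['F_2]_n).
  move=> i i' Hi []; rewrite !mxE !andbT => /nat_F2/eqP H1 /nat_F2/eqP H2.
  subst; lia.
apply: (G _ hx r s Hs); by rewrite !mul_e.
Qed.

Lemma adj n (A : 'M['F_2]_n) (hg : Fn_good A) (r s j k : 'I_n) :
  nat_of_ord s = (nat_of_ord r).+1 -> A r j = 1 -> A s k = 1 ->
  (nat_of_ord k = (nat_of_ord j).+1 \/ nat_of_ord j = (nat_of_ord k).+1)%N.
Proof.
move=> Hs Hr Hs'.
have hjk : j != k.
  apply/eqP => E; subst; exact: (disj hg Hs Hr Hs').
apply: NNPP => Hn.
pose x := (delta_mx j (0:'I_1) + delta_mx k (0:'I_1) : 'cV['F_2]_n).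
have xE : forall i, x i 0 = 1 -> i = j \/ i = k.
  move=> i; rewrite !mxE !andbT.
  case: (i =P j) => [|_]; first by left.
  case: (i =P k) => [|_]; first by right.
  by rewrite addr0.
have hx : inFn x.
  move=> i i' Hi [/xE H1 /xE H2].
  move: hjk => /eqP hjk.
  have hjk' : nat_of_ord j <> nat_of_ord k by move=> E; apply: hjk; exact: val_inj.
  case: H1 => E1; case: H2 => E2; subst; lia.
have Hrk : A r k = 0.
  apply: F2_n1 => E; exact: (disj hg Hs E Hs').
have Hsj : A s j = 0.
  apply: F2_n1 => E; exact: (disj hg Hs Hr E).
apply: (hg.2 _ hx r s Hs).
have e : forall i, (A *m x) i 0 = A i j + A i k.
  by move=> i; rewrite /x mulmxDr -!colE !mxE.
by rewrite !e Hr Hrk Hsj Hs' addr0 add0r.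
Qed.

Lemma adj2 n (A : 'M['F_2]_n) (hg : Fn_good A) (r s j k : 'I_n) :
  (nat_of_ord s = (nat_of_ord r).+1 \/ nat_of_ord r = (nat_of_ord s).+1) ->
  A r j = 1 -> A s k = 1 ->
  (nat_of_ord k = (nat_of_ord j).+1 \/ nat_of_ord j = (nat_of_ord k).+1)%N.
Proof.
move=> [H|H] Hr Hs; first exact: (adj hg H Hr Hs).
have := adj hg H Hs Hr; lia.
Qed.



Lemma same_rows n (A : 'M['F_2]_n) (a b : 'I_n) (c : nat) :
  (forall k : 'I_n, A a k = 1 -> nat_of_ord k = c) ->
  (forall k : 'I_n, A b k = 1 -> nat_of_ord k = c) ->
  (exists k, A a k = 1) -> (exists k, A b k = 1) -> forall k, A a k = A b k.
Proof.
move=> Ha Hb [ka Hka] [kb Hkb] k.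
have E : ka = kb by apply: ord_inj; rewrite (Ha _ Hka) (Hb _ Hkb).
subst kb.
case: (F2_01 (A a k)) => E1; case: (F2_01 (A b k)) => E2; rewrite ?E1 ?E2 //.
- have : k = ka by apply: ord_inj; rewrite (Hb _ E2) (Ha _ Hka).
  by move=> ?; subst; rewrite Hka in E1.
- have : k = ka by apply: ord_inj; rewrite (Ha _ E1) (Ha _ Hka).
  by move=> ?; subst; rewrite Hkb in E2.
Qed.

Lemma rows_eq_false n (A : 'M['F_2]_n) (a b : 'I_n) :
  A \in unitmx -> nat_of_ord a <> nat_of_ord b -> (forall k, A a k = A b k) -> False.
Proof.
move=> U Hab H.
have Hab' : a != b by apply/eqP => E; apply: Hab; rewrite E.
by have [k Hk] := row_neq U Hab'; apply: Hk.
Qed.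

Lemma P1 n (A : 'M['F_2]_n) (hg : Fn_good A) (i j : 'I_n) :
  (nat_of_ord j = 0%N \/ nat_of_ord j = n.-1) -> A i j = 1 ->
  nat_of_ord i = 0%N \/ nat_of_ord i = n.-1.
Proof.
move=> Hj Hij; apply: NNPP => Hi.
have Hi' := ltn_ord i; have Hj' := ltn_ord j.
have ha : (i.-1 < n)%N by lia.
have hb : (i.+1 < n)%N by lia.
pose a := Ordinal ha; pose b := Ordinal hb.
have Ha : nat_of_ord i = (nat_of_ord a).+1 by rewrite /=; lia.
have Hb : nat_of_ord b = (nat_of_ord i).+1 by [].
have [c Hc] : exists c : nat, forall k : 'I_n,
    (nat_of_ord j = k.+1 \/ nat_of_ord k = j.+1)%N -> nat_of_ord k = c.
  case: Hj => Hj; [exists 1%N | exists n.-2]; move=> k Hk; have := ltn_ord k; lia.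
apply: (rows_eq_false hg.1 (a := a) (b := b)); first by rewrite /=; lia.
apply: (same_rows (c := c)).
- move=> k Hk; apply: Hc; have := adj2 hg (r := a) (s := i) (or_introl Ha) Hk Hij; lia.
- move=> k Hk; apply: Hc; have := adj2 hg (r := b) (s := i) (or_intror Hb) Hk Hij; lia.
- exact: row_ex hg.1 a.
- exact: row_ex hg.1 b.
Qed.



Lemma P2 n (A : 'M['F_2]_n) (hg : Fn_good A) (i : 'I_n) :
  (0 < nat_of_ord i < n.-1)%N -> exists k : 'I_n, row i A = delta_mx 0 k.
Proof.
move=> Hi.
have Hi' := ltn_ord i.
have ha : (i.-1 < n)%N by lia.
have hb : (i.+1 < n)%N by lia.
pose a := Ordinal ha; pose b := Ordinal hb.
have Ha : nat_of_ord i = (nat_of_ord a).+1 by rewrite /=; lia.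
have Hb : nat_of_ord b = (nat_of_ord i).+1 by [].
have [ka Hka] := row_ex hg.1 a.
have [kb Hkb] := row_ex hg.1 b.
have [k0 Hk0] := row_ex hg.1 i.
have single : forall k, A i k = 1 -> k = k0.
  move=> k Hk; apply: ord_inj; apply: NNPP => Hne.
  have h1 := adj2 hg (r := a) (s := i) (or_introl Ha) Hka Hk.
  have h2 := adj2 hg (r := a) (s := i) (or_introl Ha) Hka Hk0.
  have h3 := adj2 hg (r := b) (s := i) (or_intror Hb) Hkb Hk.
  have h4 := adj2 hg (r := b) (s := i) (or_intror Hb) Hkb Hk0.
  apply: (rows_eq_false hg.1 (a := a) (b := b)); first by rewrite /=; lia.
  apply: (same_rows (c := ka)).
  - move=> m Hm.
    have g1 := adj2 hg (r := a) (s := i) (or_introl Ha) Hm Hk.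
    have g2 := adj2 hg (r := a) (s := i) (or_introl Ha) Hm Hk0.
    lia.
  - move=> m Hm.
    have g1 := adj2 hg (r := b) (s := i) (or_intror Hb) Hm Hk.
    have g2 := adj2 hg (r := b) (s := i) (or_intror Hb) Hm Hk0.
    lia.
  - by exists ka.
  - by exists kb.
exists k0; apply/matrixP => x y; rewrite !mxE (ord1 x) eqxx /=.
case: (y =P k0) => [->|Hy] /=; first exact: Hk0.
by apply: F2_n1 => E; apply: Hy; apply: single.
Qed.

Lemma nbr n (i : 'I_n) : (2 <= n)%N ->
  (nat_of_ord i = 0%N \/ nat_of_ord i = n.-1) ->
  exists nb : 'I_n, (nat_of_ord nb = (nat_of_ord i).+1 \/ nat_of_ord i = (nat_of_ord nb).+1) /\
    ((nat_of_ord i = 0%N /\ nat_of_ord nb = 1%N) \/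
     (nat_of_ord i = n.-1 /\ nat_of_ord nb = n.-2)).
Proof.
move=> Hn Hi.
case: (nat_of_ord i =P 0%N) => H0.
  have h : (1 < n)%N by lia.
  exists (Ordinal h) => /=; lia.
have h : (n.-2 < n)%N by lia.
exists (Ordinal h) => /=; lia.
Qed.

Lemma P4a n (A : 'M['F_2]_n) (hg : Fn_good A) (i : 'I_n) :
  (nat_of_ord i = 0%N \/ nat_of_ord i = n.-1) ->
  exists j : 'I_n, (nat_of_ord j = 0%N \/ nat_of_ord j = n.-1) /\ A i j = 1.
Proof.
move=> Hi.
have [k0 Hk0] := row_ex hg.1 i.
have Hk0' := ltn_ord k0.
case: (leqP n 2) => Hn.
  by exists k0; split => //; lia.
have h0 : (0 < n)%N by lia.
have hl : (n.-1 < n)%N by lia.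
have [r0 Hr0] := col_ex hg.1 (Ordinal h0).
have [r1 Hr1] := col_ex hg.1 (Ordinal hl).
have E0 := P1 hg (j := Ordinal h0) (or_introl erefl) Hr0.
have E1 := P1 hg (j := Ordinal hl) (or_intror erefl) Hr1.
case: (nat_of_ord r0 =P nat_of_ord i) => Q0.
  exists (Ordinal h0); split; first by left.
  by have <- : r0 = i by apply: ord_inj.
case: (nat_of_ord r1 =P nat_of_ord i) => Q1.
  exists (Ordinal hl); split; first by right.
  by have <- : r1 = i by apply: ord_inj.
have Q : r1 = r0 by apply: ord_inj; lia.
subst r1.
have [nb [Hnb1 Hnb2]] := nbr (i := r0) (ltnW Hn) E0.
have [t Ht] := row_ex hg.1 nb.
have g1 := adj2 hg (r := nb) (s := r0) ltac:(lia) Ht Hr0.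
have g2 := adj2 hg (r := nb) (s := r0) ltac:(lia) Ht Hr1.
simpl in g1, g2.
have g3 := adj2 hg (r := nb) (s := i) (j := t) (k := k0) ltac:(lia) Ht Hk0.
by exists k0; split => //; lia.
Qed.



Lemma P3 n (A : 'M['F_2]_n) (hg : Fn_good A) (i : 'I_n) :
  (nat_of_ord i = 0%N \/ nat_of_ord i = n.-1) ->
  (1 <= #|[set j : 'I_n | A i j == 1%R]| <= 2)%N.
Proof.
move=> Hi; apply/andP; split.
  have [k0 Hk0] := row_ex hg.1 i.
  by apply/card_gt0P; exists k0; rewrite inE Hk0.
case: (leqP n 1) => Hn.
  apply: leq_trans (max_card _) _; rewrite card_ord; lia.
have [nb [Hnb1 _]] := nbr (i := i) Hn Hi.
have [t Ht] := row_ex hg.1 nb.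
rewrite cardE -(size_map (@nat_of_ord n)).
apply: (@leq_trans (size [:: t.-1; t.+1])) => //.
apply: uniq_leq_size.
  rewrite map_inj_uniq ?enum_uniq //; exact: ord_inj.
move=> x /mapP [j]; rewrite mem_enum inE => /eqP Hj ->.
have := adj2 hg (r := nb) (s := i) ltac:(lia) Ht Hj.
rewrite !inE => -[->|->]; by rewrite eqxx ?orbT.
Qed.

Lemma P4b n (A : 'M['F_2]_n) (hg : Fn_good A) (i : 'I_n) :
  (nat_of_ord i = 0%N \/ nat_of_ord i = n.-1) ->
  #|[set j : 'I_n | A i j == 1%R]| = 2%N ->
         exists j1 j2 : 'I_n, j1 != j2 /\ A i j1 = 1 /\ A i j2 = 1 /\
           (nat_of_ord j1 = 0%N \/ nat_of_ord j1 = n.-1) /\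
           (nat_of_ord j2 = 2%N \/ nat_of_ord j2 = (n - 3)%N).
Proof.
move=> Hi /eqP /cards2P [x [y [Hxy HS]]].
have Hx : A i x = 1.
  have : x \in [set j : 'I_n | A i j == 1] by rewrite HS !inE eqxx.
  by rewrite inE => /eqP.
have Hy : A i y = 1.
  have : y \in [set j : 'I_n | A i j == 1] by rewrite HS !inE eqxx orbT.
  by rewrite inE => /eqP.
have Hxy' : nat_of_ord x <> nat_of_ord y.
  by move=> E; move/eqP: Hxy; apply; apply: ord_inj.
have Hx' := ltn_ord x; have Hy' := ltn_ord y.
have Hn : (2 <= n)%N by lia.
have [nb [Hnb1 _]] := nbr (i := i) Hn Hi.
have [t Ht] := row_ex hg.1 nb.
have [j0 [Hj0 Hj0']] := P4a hg Hi.
have Hj0'' := ltn_ord j0.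
have gx := adj2 hg (r := nb) (s := i) ltac:(lia) Ht Hx.
have gy := adj2 hg (r := nb) (s := i) ltac:(lia) Ht Hy.
have g0 := adj2 hg (r := nb) (s := i) ltac:(lia) Ht Hj0'.
have [[E F]|[E F]] : (nat_of_ord j0 = x /\ (nat_of_ord y = 2%N \/ nat_of_ord y = (n - 3)%N)) \/
        (nat_of_ord j0 = y /\ (nat_of_ord x = 2%N \/ nat_of_ord x = (n - 3)%N)) by lia.
- exists j0, y; have E' : x = j0 by apply: ord_inj.
  subst x.
  by repeat split => //.
- exists j0, x; have E' : y = j0 by apply: ord_inj.
  subst y.
  by repeat split => //; rewrite eq_sym.
Qed.

End Helpers.

(* 0-based indices: row/column 1 = 0, n = n-1, 3 = 2, n-2 = n-3 *)
Theorem corollary1 (n : nat) (A : 'M['F_2]_n) :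
  Fn_good A ->
  (* (1) *)
  (forall i j : 'I_n,
      (nat_of_ord j = 0%N \/ nat_of_ord j = n.-1) -> A i j = 1 ->
      nat_of_ord i = 0%N \/ nat_of_ord i = n.-1) /\
  (* (2) *)
  (forall i : 'I_n, (0 < nat_of_ord i < n.-1)%N ->
      exists k : 'I_n, row i A = delta_mx 0 k) /\
  (forall i1 i2 : 'I_n, (0 < nat_of_ord i1 < n.-1)%N ->
      (0 < nat_of_ord i2 < n.-1)%N -> row i1 A = row i2 A -> i1 = i2) /\
  (* (3) and (4), for rows 1 and n *)
  (forall i : 'I_n, (nat_of_ord i = 0%N \/ nat_of_ord i = n.-1) ->
      (1 <= #|[set j : 'I_n | A i j == 1%R]| <= 2)%N /\
      (exists j : 'I_n, (nat_of_ord j = 0%N \/ nat_of_ord j = n.-1) /\ A i j = 1) /\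
      (#|[set j : 'I_n | A i j == 1%R]| = 2%N ->
         exists j1 j2 : 'I_n, j1 != j2 /\ A i j1 = 1 /\ A i j2 = 1 /\
           (nat_of_ord j1 = 0%N \/ nat_of_ord j1 = n.-1) /\
           (nat_of_ord j2 = 2%N \/ nat_of_ord j2 = (n - 3)%N))).

Proof.
move=> hg.
split; first by move=> i j; exact: (@Helpers.P1 n A hg i j).
split; first by move=> i; exact: (@Helpers.P2 n A hg i).
split.
  move=> i1 i2 _ _ E; apply: NNPP => Hne.
  have Hne' : i1 != i2 by apply/eqP.
  have [k Hk] := Helpers.row_neq hg.1 Hne'.
  apply: Hk.
  have e1 : A i1 k = row i1 A 0 k by rewrite mxE.
  have e2 : A i2 k = row i2 A 0 k by rewrite mxE.
  by rewrite e1 e2 E.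
move=> i Hi; split; first exact: (@Helpers.P3 n A hg i Hi).
split; first exact: (@Helpers.P4a n A hg i Hi).
exact: (@Helpers.P4b n A hg i Hi).
Qed.
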